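(* Let $G$ be a random $q\times q$ symmetric matrix which is almost surely positive definite, let $F(v)=\mathbb{E}\big[\sqrt{v^{\top}Gv}\big]$, and assume the relevant expectations are finite and differentiation in $v$ commutes with expectation. Then for every $v\in\mathbb{R}^q\setminus\{0\}$ the matrix $\tfrac12\mathrm{Hess}(F^2)(v)$ is positive definite, i.e. $w^{\top}\,\tfrac12\mathrm{Hess}(F^2)(v)\,w>0$ for all $w\in\mathbb{R}^q\setminus\{0\}$.
   Context: In the paper $G=J_f^{\top}J_f$ with $J_f$ the almost surely full rank $D\times q$ Jacobian of a stochastic immersion $f:\mathbb{R}^q\to\mathbb{R}^D$ at a fixed point. $\mathrm{Hess}$ is the Hessian with respect to $v$. *)

(* Defs.v *)
From HB Require Import structures.
From mathcomp Require Import all_boot all_order all_algebra.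
From mathcomp Require Import all_classical all_reals all_analysis.
Set Implicit Arguments. Unset Strict Implicit. Unset Printing Implicit Defensive.
Import Order.TTheory GRing.Theory Num.Theory.
Import numFieldNormedType.Exports.
Local Open Scope classical_set_scope.
Local Open Scope ring_scope.

Definition qform (R : realType) (q : nat) (A : 'M[R]_q) (v : 'rV[R]_q) : R :=
  (v *m A *m v^T) 0 0.

Definition symmx (R : realType) (q : nat) (A : 'M[R]_q) : Prop := A^T = A.

Definition posdefmx_q (R : realType) (q : nat) (A : 'M[R]_q) : Prop :=
  forall x : 'rV[R]_q, x != 0 -> 0 < qform A x.

Definition ebasis (R : realType) (q : nat) (i : 'I_q) : 'rV[R]_q := delta_mx 0 i.

Definition hessian (R : realType) (q : nat) (f : 'rV[R]_q -> R) (v : 'rV[R]_q)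
  : 'M[R]_q :=
  \matrix_(i, j) ('D_(ebasis R i) ('D_(ebasis R j) f)) v.

Definition sqrtqf (R : realType) (q : nat) (A : 'M[R]_q) (v : 'rV[R]_q) : R :=
  Num.sqrt (qform A v).

Definition expF (d : measure_display) (T : measurableType d) (R : realType)
  (P : probability T R) (q : nat) (G : T -> 'M[R]_q) (v : 'rV[R]_q) : R :=
  Rintegral P setT (fun om => sqrtqf (G om) v).

(* Main.v *)
Require Import Defs.
From HB Require Import structures.
From mathcomp Require Import all_boot all_order all_algebra.
From mathcomp Require Import all_classical all_reals all_analysis.
From mathcomp Require Import ring lra measurable_realfun.
Import Order.TTheory GRing.Theory Num.Theory.
Import numFieldNormedType.Exports.
Local Open Scope classical_set_scope.
Local Open Scope ring_scope.
Set Implicit Arguments. Unset Strict Implicit. Unset Printing Implicit Defensive.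
Lemma ae_witness (d : measure_display) (T : measurableType d) (R : realType)
  (P : probability T R) (Q : T -> Prop) : {ae P, forall x, Q x} -> exists x, Q x.
Proof.
move=> H.
have PF : ProperFilter (almost_everywhere P).
  apply: ae_properfilter_algebraOfSetsType.
  have := probability_setT P. move=> /= ->. exact: lte01.
exact: (@filter_ex _ _ PF _ H).
Qed.

Lemma Rint_abs (d : measure_display) (T : measurableType d) (R : realType)
  (P : probability T R) (h : T -> R) :
  P.-integrable setT (fun x => (h x)%:E) -> {ae P, forall x, 0 <= h x} ->
  Rintegral P setT h = Rintegral P setT (fun x => `|h x|).
Proof.
move=> hi h0; rewrite /Rintegral; congr fine.
apply: ae_eq_integral => //.
- exact: measurable_int hi.
- apply/measurable_EFinP; apply: measurableT_comp => //.
  by apply/measurable_EFinP; exact: measurable_int hi.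
- by apply: filterS h0 => x hx _; rewrite ger0_norm.
Qed.

Lemma Rint_ge0 (d : measure_display) (T : measurableType d) (R : realType)
  (P : probability T R) (h : T -> R) :
  P.-integrable setT (fun x => (h x)%:E) -> {ae P, forall x, 0 <= h x} ->
  0 <= Rintegral P setT h.
Proof.
move=> hi h0; rewrite Rint_abs //; apply: Rintegral_ge0 => x _; exact: normr_ge0.
Qed.

Lemma Rint_gt0 (d : measure_display) (T : measurableType d) (R : realType)
  (P : probability T R) (h : T -> R) :
  P.-integrable setT (fun x => (h x)%:E) -> {ae P, forall x, 0 < h x} ->
  0 < Rintegral P setT h.
Proof.
move=> hi h0.
have h0' : {ae P, forall x, 0 <= h x} by apply: filterS h0 => x /ltW.
rewrite lt_def Rint_ge0 // andbT; apply/eqP => /esym H0.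
have mh : measurable_fun setT (fun x => (h x)%:E) := measurable_int _ hi.
have fin : (\int[P]_(x in setT) (h x)%:E \is a fin_num)%E.
  exact: integrable_fin_num hi.
have Hint : (\int[P]_(x in setT) `|(h x)%:E| = 0)%E.
  have e1 : (\int[P]_(x in setT) `|(h x)%:E| = \int[P]_(x in setT) (h x)%:E)%E.
    apply: ae_eq_integral => //.
    - by apply: measurableT_comp => //.
    - by apply: filterS h0 => x hx _ /=; rewrite gtr0_norm.
  rewrite e1; move: H0; rewrite /Rintegral => H0.
  by rewrite -(fineK fin) -H0.
have := (ae_eq_integral_abs P measurableT mh).1 Hint.
move=> Hz.
have [x [hx1 hx2]] : exists x, 0 < h x /\ (true -> (h x)%:E = 0%E).
  apply: (@ae_witness _ _ _ P); apply: filterS2 h0 Hz => x a b; split => //.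
  by move=> _; apply: b.
by move: hx1; rewrite (EFin_inj (hx2 isT)) ltxx.
Qed.

Lemma int_scale {d : measure_display} (T : measurableType d) (R : realType)
  (P : probability T R) (f : T -> R) (c : R) :
  P.-integrable setT (fun x => (f x)%:E) ->
  P.-integrable setT (fun x => (c * f x)%:E) /\
  Rintegral P setT (fun x => c * f x) = c * Rintegral P setT f.
Proof.
move=> fi; split; last by rewrite RintegralZl.
apply: (eq_integrable measurableT _ _ _ (integrableZl measurableT c fi)) => x _; by rewrite EFinM.
Qed.

Lemma int_add {d : measure_display} {T : measurableType d} {R : realType}
  {P : probability T R} (f g : T -> R) :
  P.-integrable setT (fun x => (f x)%:E) ->
  P.-integrable setT (fun x => (g x)%:E) ->
  P.-integrable setT (fun x => (f x + g x)%:E) /\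
  Rintegral P setT (fun x => f x + g x) = Rintegral P setT f + Rintegral P setT g.
Proof.
move=> fi gi; split; last by rewrite RintegralD.
apply: (eq_integrable measurableT _ _ _ (integrableD measurableT fi gi)) => x _; by rewrite EFinD.
Qed.

Lemma int_sum (d : measure_display) (T : measurableType d) (R : realType)
  (P : probability T R) (I : Type) (s : seq I) (f : I -> T -> R) :
  (forall i, P.-integrable setT (fun x => (f i x)%:E)) ->
  P.-integrable setT (fun x => (\sum_(i <- s) f i x)%:E) /\
  Rintegral P setT (fun x => \sum_(i <- s) f i x) = \sum_(i <- s) Rintegral P setT (f i).
Proof.
move=> fi; elim: s => [|i s [IHi IHe]].
  split.
    have h0 : P.-integrable setT (cst 0%E) := @integrable0 _ _ _ P setT.
    apply: (eq_integrable measurableT _ _ _ h0) => x _.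
    by rewrite big_nil.
  rewrite big_nil; under eq_Rintegral do rewrite big_nil.
  by rewrite Rintegral_cst // mul0r.
have [a b] := int_add (fi i) IHi.
split.
  by apply: (eq_integrable measurableT _ _ _ a) => x _; rewrite big_cons.
rewrite big_cons -IHe -b; apply: eq_Rintegral => x _; by rewrite big_cons.
Qed.
Definition bil (R : realType) (q : nat) (A : 'M[R]_q) (u w : 'rV[R]_q) : R :=
  (u *m A *m w^T) 0 0.

Lemma bilDl (R : realType) q (A : 'M[R]_q) u1 u2 w :
  bil A (u1 + u2) w = bil A u1 w + bil A u2 w.
Proof. by rewrite /bil !mulmxDl mxE. Qed.

Lemma bilZl (R : realType) q (A : 'M[R]_q) k u w :
  bil A (k *: u) w = k * bil A u w.
Proof. by rewrite /bil -!scalemxAl mxE. Qed.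

Lemma bilDr (R : realType) q (A : 'M[R]_q) u w1 w2 :
  bil A u (w1 + w2) = bil A u w1 + bil A u w2.
Proof. by rewrite /bil linearD /= mulmxDr mxE. Qed.

Lemma bilZr (R : realType) q (A : 'M[R]_q) k u w :
  bil A u (k *: w) = k * bil A u w.
Proof. by rewrite /bil linearZ /= -scalemxAr mxE. Qed.

Lemma bil_sym (R : realType) q (A : 'M[R]_q) u w :
  symmx A -> bil A u w = bil A w u.
Proof.
move=> sA; rewrite /bil.
have -> : (u *m A *m w^T) 0 0 = ((u *m A *m w^T)^T) 0 0 by rewrite [RHS]mxE.
by rewrite !trmx_mul trmxK sA mulmxA.
Qed.

Lemma bil0l (R : realType) q (A : 'M[R]_q) x : bil A 0 x = 0.
Proof. by rewrite /bil !mul0mx mxE. Qed.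

Lemma bil0r (R : realType) q (A : 'M[R]_q) x : bil A x 0 = 0.
Proof. by rewrite /bil trmx0 mulmx0 mxE. Qed.

Lemma bil_suml (R : realType) q (A : 'M[R]_q) (I : Type) (s : seq I) f x :
  bil A (\sum_(i <- s) f i) x = \sum_(i <- s) bil A (f i) x.
Proof.
elim: s => [|i s IH]; first by rewrite !big_nil bil0l.
by rewrite !big_cons bilDl IH.
Qed.

Lemma bil_sumr (R : realType) q (A : 'M[R]_q) (I : Type) (s : seq I) f x :
  bil A x (\sum_(i <- s) f i) = \sum_(i <- s) bil A x (f i).
Proof.
elim: s => [|i s IH]; first by rewrite !big_nil bil0r.
by rewrite !big_cons bilDr IH.
Qed.

Lemma sum_ebl (R : realType) q (A : 'M[R]_q) (w x : 'rV[R]_q) :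
  \sum_(i < q) w 0 i * bil A (ebasis R i) x = bil A w x.
Proof.
rewrite [in RHS](row_sum_delta w) bil_suml; apply: eq_bigr => i _.
by rewrite bilZl.
Qed.

Lemma sum_ebr (R : realType) q (A : 'M[R]_q) (w x : 'rV[R]_q) :
  \sum_(i < q) w 0 i * bil A x (ebasis R i) = bil A x w.
Proof.
rewrite [in RHS](row_sum_delta w) bil_sumr; apply: eq_bigr => i _.
by rewrite bilZr.
Qed.

Lemma qform_line (R : realType) q (A : 'M[R]_q) (e x : 'rV[R]_q) (h : R) :
  symmx A -> qform A (h *: e + x) = qform A x + h * (2 * bil A e x) + h ^+ 2 * qform A e.
Proof.
move=> sA.
have -> : qform A (h *: e + x) = bil A (h *: e + x) (h *: e + x) by [].
rewrite !bilDl !bilDr !bilZl !bilZr (bil_sym _ _ sA : bil A x e = bil A e x).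
rewrite /qform -/(bil A x x) -/(bil A e e).
ring.
Qed.

Lemma qform_sum (R : realType) q (M : 'M[R]_q) (w : 'rV[R]_q) :
  qform M w = \sum_(i < q) \sum_(j < q) w 0 i * w 0 j * M i j.
Proof.
rewrite /qform !mxE.
under eq_bigr => j _ do rewrite !mxE big_distrl /=.
rewrite exchange_big /=; apply: eq_bigr => i _; apply: eq_bigr => j _.
ring.
Qed.
Lemma Dline (R : realType) (V W : normedModType R) (f : V -> W) x v :
 'D_v f x = 'D_1 (fun h : R => f (h *: v + x)) 0.
Proof.
rewrite /derive; set g1 := fun h => h^-1 *: _; set g2 := fun h => h^-1 *: _.
suff -> : g1 = g2 by [].
by rewrite funeqE /g1 /g2 => h /=; rewrite addr0 scale0r add0r [_%:A]mulr1.
Qed.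

Lemma poly2_derive (R : realType) (a b c : R) :
  is_derive (0:R) 1 (fun h : R => a + h * b + h ^+ 2 * c) b.
Proof.
have H : is_derive (0:R) 1 (cst a + ( *%R ^~ b) + (fun h => h ^+ 2 * c)) b.
  apply: is_derive_eq.
  by rewrite !(scale0r, scaler0, add0r, addr0) [b%:A]mulr1.
suff -> : (fun h : R => a + h * b + h ^+ 2 * c) =
  (cst a + ( *%R ^~ b) + (fun h => h ^+ 2 * c)) by [].
by apply: funext => h.
Qed.

Lemma sqrt_line (R : realType) (a b c : R) : 0 < a ->
  is_derive (0:R) 1 (fun h : R => Num.sqrt (a + h * b + h ^+ 2 * c)) (b / (2 * Num.sqrt a)).
Proof.
move=> a0.
pose p := fun h : R => a + h * b + h ^+ 2 * c.
have p0 : p 0 = a by rewrite /p mul0r expr0n /= mul0r !addr0.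
have dp : is_derive (0:R) 1 p b := @poly2_derive R a b c.
have ds : is_derive (p 0) 1 Num.sqrt (2 * Num.sqrt a)^-1 by rewrite p0; exact: is_derive1_sqrt.
have dpd : derivable p 0 1 := @ex_derive _ _ _ _ _ _ _ dp.
have dsd : derivable Num.sqrt (p 0) 1 := @ex_derive _ _ _ _ _ _ _ ds.
change (is_derive (0:R) (1:R) (Num.sqrt \o p) (b / (2 * Num.sqrt a))).
split.
  apply/derivable1_diffP; apply: differentiable_comp; exact/derivable1_diffP.
rewrite -derive1E derive1_comp // !derive1E !derive_val.
by rewrite mulrC.
Qed.

Lemma rat_line (R : realType) (a b c g k : R) : 0 < a ->
  'D_1 (fun h : R => (k + h * g) * (Num.sqrt (a + h * b + h ^+ 2 * c))^-1) 0
  = g / Num.sqrt a - k * (b / (2 * Num.sqrt a)) / a.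
Proof.
move=> a0.
pose S := fun h : R => Num.sqrt (a + h * b + h ^+ 2 * c).
have dS := @sqrt_line R a b c a0.
have S0 : S 0 = Num.sqrt a by rewrite /S mul0r expr0n /= mul0r !addr0.
have Sn0 : S 0 != 0 by rewrite S0 gt_eqF // sqrtr_gt0.
have dl : is_derive (0:R) (1:R) (fun h : R => k + h * g) g.
  have H : is_derive (0:R) (1:R) (cst k + ( *%R ^~ g)) g.
    by apply: is_derive_eq; rewrite !(scale0r, scaler0, add0r, addr0) [g%:A]mulr1.
  suff -> : (fun h : R => k + h * g) = (cst k + ( *%R ^~ g)) by [].
  by apply: funext.
have -> : (fun h : R => (k + h * g) * (Num.sqrt (a + h * b + h ^+ 2 * c))^-1)
  = (fun h : R => k + h * g) * (fun h => (S h)^-1) by apply: funext.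
have dS' : is_derive (0:R) (1:R) S (b / (2 * Num.sqrt a)) := dS.
rewrite deriveM //; last first.
rewrite deriveV //.
rewrite (@derive_val _ _ _ _ _ _ _ dS') (@derive_val _ _ _ _ _ _ _ dl) S0 /= mul0r addr0.
have s0 : Num.sqrt a != 0 by rewrite gt_eqF // sqrtr_gt0.
rewrite -[X in _ = _ - _ / X](sqr_sqrtr (ltW a0)).
rewrite /GRing.scale /=.
by field.
Qed.

Lemma D1_sqrtqf (R : realType) q (A : 'M[R]_q) (x e : 'rV[R]_q) :
  symmx A -> 0 < qform A x ->
  is_derive x e (sqrtqf A) (bil A e x / sqrtqf A x).
Proof.
move=> sA a0.
have line : (fun h : R => sqrtqf A (h *: e + x)) =
  (fun h => Num.sqrt (qform A x + h * (2 * bil A e x) + h ^+ 2 * qform A e)).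
  by apply: funext => h; rewrite /sqrtqf qform_line.
have d1 := @sqrt_line R (qform A x) (2 * bil A e x) (qform A e) a0.
split.
  by apply/derivable1P; rewrite line; exact: (@ex_derive _ _ _ _ _ _ _ d1).
rewrite Dline line (@derive_val _ _ _ _ _ _ _ d1) /sqrtqf.
have s0 : Num.sqrt (qform A x) != 0 by rewrite gt_eqF // sqrtr_gt0.
by field.
Qed.

Lemma near_neq0 (R : realType) q (v : 'rV[R]_q) : v != 0 ->
  \forall y \near v, y != 0.
Proof. move=> vn0; have := @cvgr_neq0 _ _ _ (nbhs v) _ id v (@cvg_id _ _) vn0; exact. Qed.

Lemma D2_sqrtqf (R : realType) q (A : 'M[R]_q) (v e1 e2 : 'rV[R]_q) :
  symmx A -> posdefmx_q A -> v != 0 ->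
  'D_e1 ('D_e2 (sqrtqf A)) v =
  (bil A e2 e1 * qform A v - bil A e2 v * bil A e1 v) / (qform A v * sqrtqf A v).
Proof.
move=> sA pA vn0.
rewrite (@near_eq_derive _ _ _ _ (fun y => bil A e2 y / sqrtqf A y)); last first.
  near=> y.
  have yn0 : y != 0 by near: y; exact: near_neq0.
  by rewrite (@derive_val _ _ _ _ _ _ _ (D1_sqrtqf e2 sA (pA y yn0))).
have a0 := pA v vn0.
rewrite Dline.
have -> : (fun h : R => bil A e2 (h *: e1 + v) / sqrtqf A (h *: e1 + v)) =
  (fun h => (bil A e2 v + h * bil A e2 e1) *
     (Num.sqrt (qform A v + h * (2 * bil A e1 v) + h ^+ 2 * qform A e1))^-1).
  by apply: funext => h; rewrite /sqrtqf qform_line // bilDr bilZr addrC.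
rewrite rat_line // /sqrtqf.
have s0 : Num.sqrt (qform A v) != 0 by rewrite gt_eqF // sqrtr_gt0.
have q0 : qform A v != 0 by rewrite gt_eqF.
by field; rewrite s0 q0.
Unshelve. all: by end_near.
Qed.

Lemma h1_formula (R : realType) q (A : 'M[R]_q) (v w : 'rV[R]_q) :
  symmx A -> posdefmx_q A -> v != 0 ->
  \sum_(i < q) w 0 i * 'D_(ebasis R i) (sqrtqf A) v = bil A w v / sqrtqf A v.
Proof.
move=> sA pA vn0.
under eq_bigr => i _ do
  rewrite (@derive_val _ _ _ _ _ _ _ (D1_sqrtqf (ebasis R i) sA (pA v vn0))) mulrA.
by rewrite -big_distrl /= sum_ebl.
Qed.

Lemma h2_formula (R : realType) q (A : 'M[R]_q) (v w : 'rV[R]_q) :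
  symmx A -> posdefmx_q A -> v != 0 ->
  \sum_(i < q) \sum_(j < q) w 0 i * w 0 j *
     'D_(ebasis R i) ('D_(ebasis R j) (sqrtqf A)) v
  = (qform A w * qform A v - bil A w v ^+ 2) / (qform A v * sqrtqf A v).
Proof.
move=> sA pA vn0.
transitivity (\sum_(i < q) (w 0 i * (\sum_(j < q) w 0 j * bil A (ebasis R j) (ebasis R i)) * qform A v
   - w 0 i * bil A (ebasis R i) v * (\sum_(j < q) w 0 j * bil A (ebasis R j) v)) / (qform A v * sqrtqf A v)).
  apply: eq_bigr => i _.
  rewrite mulrBl !(big_distrr, big_distrl) /= -sumrB.
  apply: eq_bigr => j _; rewrite D2_sqrtqf //; ring.
under eq_bigr => i _ do rewrite !sum_ebl.
rewrite -big_distrl /= sumrB -!big_distrl /= sum_ebl sum_ebr.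
by rewrite expr2.
Qed.

Lemma qformE (R : realType) q (A : 'M[R]_q) x : qform A x = bil A x x.
Proof. by []. Qed.

Lemma bilNl (R : realType) q (A : 'M[R]_q) u w : bil A (- u) w = - bil A u w.
Proof. by rewrite -scaleN1r bilZl mulN1r. Qed.

Lemma bilNr (R : realType) q (A : 'M[R]_q) u w : bil A u (- w) = - bil A u w.
Proof. by rewrite -scaleN1r bilZr mulN1r. Qed.

Lemma cs_identity (R : realType) q (A : 'M[R]_q) (v w : 'rV[R]_q) :
  symmx A -> 0 < qform A v ->
  qform A w * qform A v - bil A w v ^+ 2 =
  qform A v * qform A (w - (bil A w v / qform A v) *: v).
Proof.
move=> sA a0.
have q0 : qform A v != 0 by rewrite gt_eqF.
rewrite !qformE !bilDl !bilDr !bilNl !bilNr !bilZl !bilZr (bil_sym v w sA).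
by field.
Qed.

Lemma formula_ge0 (R : realType) q (A : 'M[R]_q) (v w : 'rV[R]_q) :
  symmx A -> posdefmx_q A -> v != 0 ->
  0 <= (qform A w * qform A v - bil A w v ^+ 2) / (qform A v * sqrtqf A v).
Proof.
move=> sA pA vn0; have a0 := pA v vn0.
have s0 : 0 < sqrtqf A v by rewrite /sqrtqf sqrtr_gt0.
rewrite cs_identity //; apply: divr_ge0; last by apply: mulr_ge0; exact: ltW.
apply: mulr_ge0; first exact: ltW.
set u := w - _ *: v.
have [->|un0] := eqVneq u 0; first by rewrite qformE bil0l.
exact: ltW (pA u un0).
Qed.

Lemma formula_gt0 (R : realType) q (A : 'M[R]_q) (v w : 'rV[R]_q) :
  symmx A -> posdefmx_q A -> v != 0 -> ~ (exists c : R, w = c *: v) ->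
  0 < (qform A w * qform A v - bil A w v ^+ 2) / (qform A v * sqrtqf A v).
Proof.
move=> sA pA vn0 np; have a0 := pA v vn0.
have s0 : 0 < sqrtqf A v by rewrite /sqrtqf sqrtr_gt0.
rewrite cs_identity //; apply: divr_gt0; last exact: mulr_gt0.
apply: mulr_gt0 => //; apply: pA.
apply/eqP => /eqP; rewrite subr_eq0 => /eqP wc; apply: np; eexists; exact: wc.
Qed.

Unset Implicit Arguments.

Theorem mainTheorem3 (d : measure_display) (T : measurableType d) (R : realType)
  (P : probability T R) (q : nat) (G : T -> 'M[R]_q)
  (G_meas : forall i j, measurable_fun setT (fun om => G om i j))
  (G_sym : forall om, symmx (G om))
  (G_pd : {ae P, forall om, posdefmx_q (G om)})
  (F_int : forall v : 'rV[R]_q,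
     P.-integrable setT (fun om => (sqrtqf (G om) v)%:E))
  (D1_int : forall v : 'rV[R]_q, v != 0 -> forall i : 'I_q,
     P.-integrable setT (fun om => ('D_(ebasis R i) (sqrtqf (G om)) v)%:E))
  (D2_int : forall v : 'rV[R]_q, v != 0 -> forall i j : 'I_q,
     P.-integrable setT
       (fun om => ('D_(ebasis R i) ('D_(ebasis R j) (sqrtqf (G om))) v)%:E))
  (D1_der : forall v : 'rV[R]_q, v != 0 -> forall i : 'I_q,
     derivable (expF P G) v (ebasis R i))
  (D1_comm : forall v : 'rV[R]_q, v != 0 -> forall i : 'I_q,
     'D_(ebasis R i) (expF P G) v
       = Rintegral P setT (fun om => 'D_(ebasis R i) (sqrtqf (G om)) v))
  (D2_der : forall v : 'rV[R]_q, v != 0 -> forall i j : 'I_q,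
     derivable ('D_(ebasis R j) (expF P G)) v (ebasis R i))
  (D2_comm : forall v : 'rV[R]_q, v != 0 -> forall i j : 'I_q,
     'D_(ebasis R i) ('D_(ebasis R j) (expF P G)) v
       = Rintegral P setT
           (fun om => 'D_(ebasis R i) ('D_(ebasis R j) (sqrtqf (G om))) v)) :
  forall v : 'rV[R]_q, v != 0 ->
  forall w : 'rV[R]_q, w != 0 ->
    0 < qform (2^-1 *: hessian (fun x => expF P G x ^+ 2) v) w.
Proof.
move=> v vn0 w wn0.
set F := expF P G.
have Hij : forall i j, hessian (fun x => F x ^+ 2) v i j =
   2 * (F v * 'D_(ebasis R i) ('D_(ebasis R j) F) v
        + 'D_(ebasis R j) F v * 'D_(ebasis R i) F v).
  move=> i j; rewrite /hessian mxE.
  rewrite (@near_eq_derive _ _ _ _ (fun x => 2 * (F x * 'D_(ebasis R j) F x))); last first.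
    near=> y.
    have yn0 : y != 0 by near: y; exact: near_neq0.
    have -> : (fun x => F x ^+ 2) = F * F by apply: funext => x; rewrite expr2.
    rewrite deriveM; [ | exact: D1_der | exact: D1_der].
    by rewrite mulr_natl mulr2n.
  have -> : (fun x => 2 * (F x * 'D_(ebasis R j) F x)) =
     2 \*o (F * (fun x => 'D_(ebasis R j) F x)) by apply: funext.
  rewrite deriveMl; last by apply: derivableM; [exact: D1_der | exact: D2_der].
  by rewrite deriveM; [ | exact: D1_der | exact: D2_der].
pose S2 := \sum_(i < q) \sum_(j < q) w 0 i * w 0 j * 'D_(ebasis R i) ('D_(ebasis R j) F) v.
pose S1 := \sum_(i < q) w 0 i * 'D_(ebasis R i) F v.
have Hq : qform (2^-1 *: hessian (fun x => F x ^+ 2) v) w = F v * S2 + S1 ^+ 2.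
  rewrite qform_sum.
  under eq_bigr => i _ do under eq_bigr => j _ do rewrite mxE Hij.
  rewrite /S2 /S1 expr2 big_distrr big_distrl /= -big_split /=; apply: eq_bigr => i _.
  rewrite !big_distrr /= -big_split /=; apply: eq_bigr => j _.
  have h2 : (2 : R) != 0 by rewrite pnatr_eq0.
  clearbody F; by field.
rewrite Hq.
pose N2 i j om := 'D_(ebasis R i) ('D_(ebasis R j) (sqrtqf (G om))) v.
pose N1 i om := 'D_(ebasis R i) (sqrtqf (G om)) v.
pose h2 om := \sum_(i < q) \sum_(j < q) w 0 i * w 0 j * N2 i j om.
pose h1 om := \sum_(i < q) w 0 i * N1 i om.
have intf2 : forall i j, P.-integrable setT (fun om => (w 0 i * w 0 j * N2 i j om)%:E) /\
    Rintegral P setT (fun om => w 0 i * w 0 j * N2 i j om) =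
    w 0 i * w 0 j * 'D_(ebasis R i) ('D_(ebasis R j) F) v.
  move=> i j; have [a b] := int_scale (w 0 i * w 0 j) (D2_int v vn0 i j).
  by split => //; rewrite b /F D2_comm.
have intg2 : forall i, P.-integrable setT (fun om => (\sum_(j < q) w 0 i * w 0 j * N2 i j om)%:E) /\
    Rintegral P setT (fun om => \sum_(j < q) w 0 i * w 0 j * N2 i j om) =
    \sum_(j < q) w 0 i * w 0 j * 'D_(ebasis R i) ('D_(ebasis R j) F) v.
  move=> i; have [a b] := @int_sum _ _ _ _ _ (index_enum 'I_q) (fun j om => w 0 i * w 0 j * N2 i j om)
     (fun j => (intf2 i j).1).
  split => //; rewrite b; apply: eq_bigr => j _; exact: (intf2 i j).2.
have [ih2 eh2] : P.-integrable setT (fun om => (h2 om)%:E) /\ Rintegral P setT h2 = S2.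
  have [a b] := @int_sum _ _ _ _ _ (index_enum 'I_q) (fun i om => \sum_(j < q) w 0 i * w 0 j * N2 i j om)
     (fun i => (intg2 i).1).
  split => //; rewrite b; apply: eq_bigr => i _; exact: (intg2 i).2.
have intf1 : forall i, P.-integrable setT (fun om => (w 0 i * N1 i om)%:E) /\
    Rintegral P setT (fun om => w 0 i * N1 i om) = w 0 i * 'D_(ebasis R i) F v.
  move=> i; have [a b] := int_scale (w 0 i) (D1_int v vn0 i).
  by split => //; rewrite b /F D1_comm.
have [ih1 eh1] : P.-integrable setT (fun om => (h1 om)%:E) /\ Rintegral P setT h1 = S1.
  have [a b] := @int_sum _ _ _ _ _ (index_enum 'I_q) (fun i om => w 0 i * N1 i om) (fun i => (intf1 i).1).
  split => //; rewrite b; apply: eq_bigr => i _; exact: (intf1 i).2.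
have Fpos : 0 < F v.
  apply: Rint_gt0; first exact: F_int.
  apply: filterS G_pd => om pd; rewrite /sqrtqf sqrtr_gt0; exact: pd.
have h2E : {ae P, forall om, h2 om = (qform (G om) w * qform (G om) v - bil (G om) w v ^+ 2)
    / (qform (G om) v * sqrtqf (G om) v)}.
  apply: filterS G_pd => om pd; exact: h2_formula (G_sym om) pd vn0.
have h1E : {ae P, forall om, h1 om = bil (G om) w v / sqrtqf (G om) v}.
  apply: filterS G_pd => om pd; exact: h1_formula (G_sym om) pd vn0.
have [[c wc]|npar] := pselect (exists c : R, w = c *: v).
  have cn0 : c != 0 by apply: contraNneq wn0 => c0; rewrite wc c0 scale0r.
  have S1c : 0 < c * S1.
    have [a b] := int_scale c ih1.
    rewrite -eh1 -b; apply: Rint_gt0 => //.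
    apply: filterS2 G_pd h1E => om pd ->.
    have a0 := pd v vn0.
    have s0 : 0 < sqrtqf (G om) v by rewrite /sqrtqf sqrtr_gt0.
    rewrite wc bilZl -qformE -mulrA mulrA; apply: mulr_gt0; last exact: divr_gt0.
    by rewrite lt_def sqrf_eq0 cn0 /= -expr2 sqr_ge0.
  have S1n0 : S1 != 0 by apply: contraTneq S1c => ->; rewrite mulr0 ltxx.
  have S2ge0 : 0 <= S2.
    rewrite -eh2; apply: Rint_ge0 => //.
    apply: filterS2 G_pd h2E => om pd ->; exact: formula_ge0 (G_sym om) pd vn0.
  apply: ltr_wpDl; first exact: mulr_ge0 (ltW Fpos) S2ge0.
  by rewrite lt_def sqrf_eq0 S1n0 sqr_ge0.
have S2gt0 : 0 < S2.
  rewrite -eh2; apply: Rint_gt0 => //.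
  apply: filterS2 G_pd h2E => om pd ->; exact: formula_gt0 (G_sym om) pd vn0 npar.
apply: ltr_pwDl; first exact: mulr_gt0.
exact: sqr_ge0.
Unshelve. all: by end_near.
Qed.
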